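(* Let $V=\mathrm{span}_{\mathbb{F}_q}\{x_1,\dots,x_n\}\subset S$, let $m\ge1$, let $\lambda=(n^m)$ be the partition with $m$ parts all equal to $n$, and let $\mu\subseteq\lambda$ be a partition with conjugate $\mu'$. Then, in $\widehat S$, $$T_{\lambda/\mu}(V)=(-1)^{nm+|\mu|}\,\frac{\det\big(x_i^{q^{\,n+j-\mu'_j-1}}\big)_{1\le i,j\le n}}{\det\big(x_i^{q^{\,n+j-m-1}}\big)_{1\le i,j\le n}}.$$
   Context: Let $q$ be a power of a prime $p$, $S=\mathbb{F}_q[x_1,\dots,x_n]$, $\widehat S=\bigcup_{r\ge0}\mathbb{F}_q[x_1^{q^{-r}},\dots,x_n^{q^{-r}}]$ (so $x_i^{q^{e}}$ makes sense for all $e\in\mathbb{Z}$), $\varphi(u)=u^q$ the Frobenius automorphism of $\widehat S$. For a subspace $W\subset S$ of dimension $k$ with basis $w_1,\dots,w_k$ and strictly decreasing nonnegative integers $\alpha_1>\dots>\alpha_k$, $A_\alpha(W)=\det(w_i^{q^{\alpha_j}})_{i,j}$; for a partition $\lambda$ with at most $k$ nonzero parts, $S_\lambda(W)=A_{\lambda+\delta_k}(W)/A_{\delta_k}(W)$, $\delta_k=(k-1,\dots,0)$. $E_r(W)=S_{(1^r)}(W)$ for $0\le r\le k$, $E_r(W)=0$ otherwise. For partitions $\lambda,\mu$ with $N=\max\{\ell(\lambda),\ell(\mu)\}$ ($\ell$ = number of nonzero parts), $T_{\lambda/\mu}(W)=\det\big((-1)^{\lambda_i-\mu_j-i+j}\varphi^{\lambda_i-i}E_{\lambda_i-\mu_j-i+j}(W)\big)_{1\le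 i,j\le N}$. $|\mu|$ is the sum of the parts of $\mu$, and $\mu\subseteq\lambda$ means $\mu_i\le\lambda_i$ for all $i$. *)

(* Defs.v *)
From HB Require Import structures.
From mathcomp Require Import all_boot all_order all_algebra all_field.
From mathcomp Require Export mpoly.
Set Implicit Arguments. Unset Strict Implicit. Unset Printing Implicit Defensive.
Import Order.TTheory GRing.Theory Num.Theory.
Local Open Scope ring_scope.

(* The ambient ring \hat S is realized inside a perfect field K:
   [finv] is a q-th root function on K, so that the Frobenius u |-> u^q is
   bijective, with inverse [finv]. *)
Section Defs.
Variables (K : fieldType) (q : nat) (finv : K -> K).

Definition frob (e : int) (y : K) : K :=
  match e with
  | Posz k => y ^+ (q ^ k)
  | Negz k => iter k.+1 finv y
  end.

Variables (n : nat) (x : 'I_n -> K).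

(* A_alpha(V) for the basis x_1..x_n of V, alpha given 0-indexed *)
Definition Adet (alpha : 'I_n -> nat) : K :=
  \det (\matrix_(i < n, j < n) x i ^+ (q ^ alpha j)).

Definition delta_exp (j : 'I_n) : nat := (n - 1 - j)%N.
(* (1^r) + delta_n *)
Definition alpha_E (r : nat) (j : 'I_n) : nat := (n - 1 - j + (j < r))%N.

(* E_r(V) = S_(1^r)(V) for 0 <= r <= n, and 0 otherwise *)
Definition Eel (r : int) : K :=
  if (0 <= r) && (r <= n%:Z) then Adet (alpha_E (absz r)) / Adet delta_exp
  else 0.

(* partitions: nonincreasing sequences of naturals (trailing zeros allowed);
   parts are read with nth 0, so lam_i = nth 0 lam (i-1) *)
Definition ellp (s : seq nat) : nat := count (fun a => 0 < a)%N s.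

Definition Tskew (lam mu : seq nat) : K :=
  let N := maxn (ellp lam) (ellp mu) in
  \det (\matrix_(i < N, j < N)
     let e : int := (nth 0 lam i)%:Z - (nth 0 mu j)%:Z - i%:Z + j%:Z in
     (-1) ^+ (absz e) * frob ((nth 0 lam i)%:Z - (i.+1)%:Z) (Eel e)).
End Defs.

Definition is_partition (s : seq nat) : bool := sorted geq s.
Definition subpart (mu lam : seq nat) : Prop :=
  forall i, (nth 0 mu i <= nth 0 lam i)%N.
(* conjugate partition, 1-indexed: mu'_j = #{ i | mu_i >= j } *)
Definition conjp (mu : seq nat) (j : nat) : nat := count (fun a => j <= a)%N mu.

(* Main.v *)
Require Import Defs.
From HB Require Import structures.
From mathcomp Require Import all_boot all_order all_algebra all_field.
From mathcomp Require Import mpoly.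
From mathcomp Require Import zify ring fingroup perm pgroup abelian.
Import GRing.Theory.
Set Implicit Arguments. Unset Strict Implicit.

Lemma sorted_geq_all (a : nat) s : sorted geq (a :: s) -> all (fun b => b <= a) s.
Proof.
move=> hs; have tr : transitive geq by move=> y x z h1 h2; apply: leq_trans h2 h1.
exact: order_path_min tr hs.
Qed.

Lemma cnt_nth (s : seq nat) (i k : nat) : sorted geq s -> 0 < i ->
  (k < count (fun a => i <= a) s) = (i <= nth 0 s k).
Proof.
move=> hs hi; elim: s hs k => [|a s IH] hs k /=.
  by rewrite nth_nil; lia.
have hall := sorted_geq_all hs.
have hs' : sorted geq s by move: hs => /= /path_sorted.
case: (leqP i a) => hia.
  case: k => [|k] /=; first by rewrite hia.
  by rewrite add1n ltnS IH.
have -> : count (fun a => i <= a) s = 0.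
  apply/eqP; rewrite -leqn0 leqNgt -has_count; apply/hasPn => b hb.
  by move/allP: hall => /(_ b hb); lia.
case: k => [|k] /=; first lia.
have : nth 0 s k <= a.
  case: (ltnP k (size s)) => hk; first by move/allP: hall; apply; apply: mem_nth.
  by rewrite nth_default.
lia.
Qed.

Lemma sumn_window (s : seq nat) N :
  (forall k, N <= k -> nth 0 s k = 0) -> sumn s = \sum_(k < N) nth 0 s k.
Proof.
elim: s N => [|a s IH] N h /=.
  by rewrite big1 // => k _; rewrite nth_nil.
case: N h => [|N] h.
  rewrite big_ord0; have := h 0 (leqnn 0) => /= ->.
  by rewrite (IH 0) ?big_ord0 // => k _; apply: (h k.+1).
by rewrite big_ord_recl /= (IH N) // => k hk; apply: (h k.+1).
Qed.


Lemma part_facts (n m : nat) (mu : seq nat) :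
  is_partition mu -> subpart mu (nseq m n) ->
  [/\ (forall k, nth 0 mu k <= n),
      (forall k, m <= k -> nth 0 mu k = 0),
      (forall k, nth 0 mu k.+1 <= nth 0 mu k),
      (forall i, 0 < i -> conjp mu i <= m) &
      (forall i k, 0 < i -> (k < conjp mu i) = (i <= nth 0 mu k))].
Proof.
move=> hp hs.
have h1 : forall k, nth 0 mu k <= n.
  by move=> k; have := hs k; rewrite nth_nseq; case: ifP => _ //; lia.
have h2 : forall k, m <= k -> nth 0 mu k = 0.
  by move=> k hk; have := hs k; rewrite nth_nseq ltnNge hk /=; lia.
have h5 : forall i k, 0 < i -> (k < conjp mu i) = (i <= nth 0 mu k).
  by move=> i k hi; apply: cnt_nth.
split => //.
- move=> k; case: (posnP (nth 0 mu k.+1)) => hp1; first by rewrite hp1.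
  have H1 : k.+1 < conjp mu (nth 0 mu k.+1) by rewrite h5.
  have : k < conjp mu (nth 0 mu k.+1) by lia.
  by rewrite h5.
- move=> i hi; rewrite leqNgt h5 // h2 //; lia.
Qed.

Lemma CD_facts (n m : nat) (mu : seq nat) :
  is_partition mu -> subpart mu (nseq m n) ->
  [/\ (forall k, k.+1 < m -> n + k - nth 0 mu k < n + k.+1 - nth 0 mu k.+1),
      (forall j, j.+1 < n -> j + conjp mu (n - j) < j.+1 + conjp mu (n - j.+1)),
      (forall k, k < m -> n + k - nth 0 mu k < m + n),
      (forall j, j < n -> j + conjp mu (n - j) < m + n) &
      (forall k j, k < m -> j < n -> n + k - nth 0 mu k != j + conjp mu (n - j))].
Proof.
move=> hp hs; have [h1 h2 h3 h4 h5] := part_facts hp hs.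
split.
- move=> k hk; have := h1 k; have := h1 k.+1; have := h3 k; lia.
- move=> j hj; have : conjp mu (n - j) <= conjp mu (n - j.+1).
    by apply: sub_count => a /=; lia.
  lia.
- move=> k hk; have := h1 k; lia.
- move=> j hj; have := h4 (n - j) (_ : 0 < n - j); lia.
- move=> k j hk hj; have hi : 0 < n - j by lia.
  have := h5 _ k hi; have := h1 k.
  case: (leqP (n - j) (nth 0 mu k)) => hc; lia.
Qed.

Lemma sign_parity (n m : nat) (mu : seq nat) :
  is_partition mu -> subpart mu (nseq m n) ->
  exists T, (\sum_(k < m) (k + (n + k - nth 0 mu k)) + sumn mu = T.*2 + n * m)%N.
Proof.
move=> hp hs; have [h1 h2 h3 h4 h5] := part_facts hp hs.
exists (\sum_(k < m) k)%N.
have -> : (n * m = \sum_(k < m) n)%N by rewrite sum_nat_const card_ord mulnC.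
rewrite (sumn_window h2) -big_split /= -mul2n big_distrr /= -big_split /=.
apply: eq_bigr => k _; have := h1 k; lia.
Qed.

Local Open Scope ring_scope.

Lemma fr_inj (K : fieldType) (q : nat) (hq : (0 < q)%N)
  (hadd : forall a b : K, (a + b) ^+ q = a ^+ q + b ^+ q) (y z : K) :
  y ^+ q = z ^+ q -> y = z.
Proof.
move=> h; apply/eqP; rewrite -subr_eq0.
have : (y - z) ^+ q = 0.
  by apply: (addIr (z ^+ q)); rewrite -hadd subrK h add0r.
by move/eqP; rewrite expf_eq0 hq.
Qed.


Lemma frob_Sint (k : nat) : Negz k.+1 + 1 = Negz k.
Proof. rewrite !NegzE; lia. Qed.
Lemma frob_Sint0 : Negz 0 + 1 = 0.
Proof. by []. Qed.
Lemma frob_Pint (k : nat) : Posz k + 1 = Posz k.+1.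
Proof. lia. Qed.

Definition FH (K : fieldType) (q : nat) (finv : K -> K) :=
  [/\ (0 < q)%N, (forall a b : K, (a + b) ^+ q = a ^+ q + b ^+ q)
    & (forall y, finv y ^+ q = y)].

Lemma finvD K q finv (h : @FH K q finv) a b : finv (a + b) = finv a + finv b.
Proof. case: h => hq hadd hi; apply: (fr_inj hq hadd); by rewrite hadd !hi. Qed.
Lemma finvM K q finv (h : @FH K q finv) a b : finv (a * b) = finv a * finv b.
Proof. case: h => hq hadd hi; apply: (fr_inj hq hadd); by rewrite exprMn !hi. Qed.
Lemma finv1 K q finv (h : @FH K q finv) : finv 1 = 1.
Proof. case: h => hq hadd hi; apply: (fr_inj hq hadd); by rewrite hi expr1n. Qed.
Lemma finv0 K q finv (h : @FH K q finv) : finv 0 = 0.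
Proof. case: h => hq hadd hi; apply: (fr_inj hq hadd); by rewrite hi expr0n; case: q hq hadd hi. Qed.

Lemma frobD K q finv (h : @FH K q finv) e a b :
  frob q finv e (a + b) = frob q finv e a + frob q finv e b.
Proof.
have [hq hadd hi] := h.
case: e => k /=.
  elim: k => [|k IH]; first by rewrite !expn0 !expr1.
  by rewrite expnSr !exprM IH hadd.
elim: k => [|k IH] /=; first apply: (finvD h).
by rewrite IH (finvD h).
Qed.

Lemma frobM K q finv (h : @FH K q finv) e a b :
  frob q finv e (a * b) = frob q finv e a * frob q finv e b.
Proof.
have [hq hadd hi] := h.
case: e => k /=; first by rewrite exprMn.
elim: k => [|k IH] /=; first apply: (finvM h).
by rewrite IH (finvM h).
Qed.

Lemma frob1 K q finv (h : @FH K q finv) e : frob q finv e 1 = 1.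
Proof.
case: e => k /=; first by rewrite expr1n.
elim: k => [|k IH] /=; first apply: (finv1 h).
by rewrite IH (finv1 h).
Qed.

Lemma frob0 K q finv (h : @FH K q finv) e : frob q finv e 0 = 0.
Proof.
have [hq hadd hi] := h.
case: e => k /=; first by rewrite expr0n expn_eq0 eqn0Ngt hq.
elim: k => [|k IH] /=; first apply: (finv0 h).
by rewrite IH (finv0 h).
Qed.

Lemma frobN K q finv (h : @FH K q finv) e a : frob q finv e (- a) = - frob q finv e a.
Proof.
apply/eqP; rewrite -addr_eq0 -frobD // addNr frob0 //.
Qed.

Lemma frobX K q finv (h : @FH K q finv) e a k : frob q finv e (a ^+ k) = frob q finv e a ^+ k.
Proof.
elim: k => [|k IH]; first by rewrite !expr0 frob1.
by rewrite !exprS frobM // IH.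
Qed.

Lemma frobS K q finv (h : @FH K q finv) e y : frob q finv (e + 1) y = frob q finv e y ^+ q.
Proof.
have [hq hadd hi] := h.
case: e => k.
  by rewrite frob_Pint /= expnSr exprM.
case: k => [|k]; first by rewrite /= hi.
rewrite frob_Sint /=. by rewrite hi.
Qed.

Lemma frob_0 (K : fieldType) (q : nat) (finv : K -> K) (e : int) (y : K) : e = 0 -> frob q finv e y = y.
Proof. by move=> ->; rewrite /= expn0 expr1. Qed.

Lemma frob0e (K : fieldType) (q : nat) (finv : K -> K) (y : K) : frob q finv 0 y = y.
Proof. by rewrite /= expn0 expr1. Qed.

Lemma frob_inj K q finv (h : @FH K q finv) e : injective (frob q finv e).
Proof.
have [hq hadd hi] := h.
move=> a b; case: e => k /=.
  elim: k => [|k IH]; first by rewrite !expn0 !expr1.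
  by rewrite expnSr !exprM => /(fr_inj hq hadd) /IH.
elim: k => [|k IH] /=; first by move=> e; rewrite -(hi a) -(hi b) e.
by move=> e; apply: IH; rewrite -(hi (finv (iter k finv a))) -(hi (finv (iter k finv b))) e.
Qed.

Lemma frob_comp K q finv (h : @FH K q finv) a b y :
  frob q finv a (frob q finv b y) = frob q finv (a + b) y.
Proof.
have [hq hadd hi] := h.
case: b => k.
  elim: k => [|k IH]; first by rewrite addr0 frob0e.
  by rewrite -frob_Pint frobS // frobX // IH addrA frobS.
elim: k => [|k IH].
  apply: (fr_inj hq hadd); rewrite -frobX // -frobS // -frobS //.
  by rewrite -addrA addr0 frob_Sint0 frob0e.
apply: (fr_inj hq hadd); rewrite -frobX // -frobS // frob_Sint IH -frobS //.
by rewrite -addrA frob_Sint.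
Qed.

Lemma frob_sign K q finv (h : @FH K q finv) e (b : bool) :
  frob q finv e ((-1) ^+ b) = (-1) ^+ b.
Proof. by rewrite frobX // frobN // frob1. Qed.

Lemma frob_det K q finv (h : @FH K q finv) e n (A : 'M[K]_n) :
  frob q finv e (\det A) = \det (map_mx (frob q finv e) A).
Proof.
rewrite /determinant (big_morph _ (frobD h e) (frob0 h e)).
apply: eq_bigr => s _; rewrite frobM // frob_sign //.
rewrite (big_morph _ (frobM h e) (frob1 h e)); congr (_ * _).
by apply: eq_bigr => i _; rewrite mxE.
Qed.

Lemma bump_alpha n (j : 'I_n.+1) (j' : 'I_n) :
  (n - bump j j')%N = @alpha_E n j j'.
Proof.
rewrite /alpha_E /bump; have := ltn_ord j'; have := ltn_ord j.
move=> Hj Hj'; case: leqP => h1 /=; lia.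
Qed.

Lemma rel0 (K : fieldType) (q n : nat) (x : 'I_n -> K) (a : 'I_n) :
  \sum_(r < n.+1) (-1) ^+ r * Adet q x (@alpha_E n r) * x a ^+ (q ^ (n - r)) = 0.
Proof.
pose y (k : 'I_n.+1) := if unlift ord0 k is Some k' then x k' else x a.
pose B := \matrix_(k < n.+1, j < n.+1) y k ^+ (q ^ (n - j)).
have : \det B = 0.
  apply: (@determinant_alternate _ _ _ ord0 (lift ord0 a)).
    by rewrite neq_lift.
  by move=> j; rewrite !mxE /y liftK unlift_none.
rewrite (expand_det_row _ ord0) => H; rewrite -[RHS]H; apply: eq_bigr => j _.
rewrite /cofactor add0n [RHS]mulrC; congr (_ * _ * _).
  rewrite /Adet; congr (\det _); apply/matrixP => k j'.
  by rewrite !mxE /y liftK bump_alpha.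
by rewrite mxE /y unlift_none.
Qed.

Lemma incr_mono (D : nat -> nat) n :
  (forall j, (j.+1 < n)%N -> (D j < D j.+1)%N) ->
  forall i j, (i <= j)%N -> (j < n)%N -> (D i + (j - i) <= D j)%N.
Proof.
move=> hD i; elim=> [|j IH] hij hjn.
  by move: hij; rewrite leqn0 => /eqP ->; rewrite subnn addn0.
case: (leqP i j) => hij'.
  have := IH hij' (ltnW hjn); have := hD j hjn; lia.
have -> : i = j.+1 by apply/eqP; rewrite eqn_leq hij.
by rewrite subnn addn0.
Qed.

Lemma incr_id (D : nat -> nat) n :
  (forall j, (j.+1 < n)%N -> (D j < D j.+1)%N) ->
  (forall j, (j < n)%N -> (D j < n)%N) ->
  forall j, (j < n)%N -> D j = j.
Proof.
move=> hD hr j hj.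
have h1 := incr_mono hD (leq0n j) hj.
have hn : (n.-1 < n)%N by lia.
have h2 := incr_mono hD (_ : (j <= n.-1)%N) hn.
have h3 := hr _ hn.
have : (j <= n.-1)%N by lia.
move=> /h2; lia.
Qed.

Lemma incr_lt (C : nat -> nat) m :
  (forall k, (k.+1 < m)%N -> (C k < C k.+1)%N) ->
  forall i j, (i < j)%N -> (j < m)%N -> (C i < C j)%N.
Proof.
move=> hC i j hij hj; have := incr_mono hC (ltnW hij) hj; lia.
Qed.

Lemma bump_eq (a c b : nat) : (a < b)%N -> (((a <= c) + c)%N == b) = (c == b.-1).
Proof.
move=> h; case: (leqP a c) => hc /=; rewrite ?add0n ?add1n; apply/idP/idP => /eqP E; apply/eqP; lia.
Qed.

Definition selmx (K : fieldType) m n (f : nat -> nat -> K) (C : nat -> nat) :=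
  \matrix_(r < m + n, c < m + n)
     (if (r < m)%N then ((c : nat) == C r)%:R else f (r - m)%N c) : 'M[K]_(m + n).

Lemma laplace_sel (K : fieldType) m n (f : nat -> nat -> K) (C D : nat -> nat) :
 (forall k, (k.+1 < m)%N -> (C k < C k.+1)%N) ->
 (forall j, (j.+1 < n)%N -> (D j < D j.+1)%N) ->
 (forall k, (k < m)%N -> (C k < m + n)%N) ->
 (forall j, (j < n)%N -> (D j < m + n)%N) ->
 (forall k j, (k < m)%N -> (j < n)%N -> C k != D j) ->
 \det (selmx m n f C) =
 (-1) ^+ (\sum_(k < m) (k + C k))%N * \det (\matrix_(j < n, j' < n) f j (D j')).
Proof.
elim: m f C D => [|m IH] f C D hC hD hCr hDr hCD.
  rewrite big_ord0 expr0 mul1r /selmx; congr (\det _); apply/matrixP => r c.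
  by rewrite !mxE /= subn0 (incr_id hD hDr (ltn_ord c)).
have hC0 : (C 0 < m.+1 + n)%N by apply: hCr.
pose c0 := Ordinal hC0.
rewrite (expand_det_row _ ord0) (bigD1 c0) //= big1; last first.
  move=> c /negbTE hc; rewrite !mxE /=.
  by rewrite (_ : (c == C 0 :> nat) = false) ?mul0r // -hc.
rewrite addr0 !mxE /= eqxx mul1r /cofactor add0n.
pose C' k := (C k.+1).-1.
pose D' j := if (D j < C 0%N)%N then D j else (D j).-1.
pose f' r c := f r (bump (C 0%N) c).
have hlt : forall k, (k < m)%N -> (C 0 < C k.+1)%N.
  by move=> k hk; apply: (incr_lt hC); lia.
have := IH f' C' D'.
have e1 : row' ord0 (col' c0 (selmx m.+1 n f C)) = selmx m n f' C'.
  apply/matrixP => r c; rewrite !mxE /= /bump /= add1n ltnS subSS.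
  case: ifP => // hr; congr (_%:R); congr (nat_of_bool _).
  by rewrite bump_eq // hlt.
rewrite e1 => ->; clear e1 IH; last first.
- move=> k j hk hj; rewrite /C' /D'; have := hlt _ hk; have := hCD k.+1 j hk hj.
  have := hCD 0%N j (ltn0Sn _) hj; case: ifPn => /=; lia.
- move=> j hj; rewrite /D'; have := hDr _ hj; have := hCr _ (ltn0Sn m); case: ifPn; lia.
- move=> k hk; rewrite /C'; have := hCr k.+1 hk; lia.
- move=> j hj; rewrite /D'; have := hD _ hj; have := hCD 0%N j (ltn0Sn _) (ltnW hj).
  have := hCD 0%N j.+1 (ltn0Sn _) hj; do 2 case: ifPn => /=; lia.
- move=> k hk; rewrite /C'; have := hC k.+1 hk; have := hlt k (ltnW hk); lia.
rewrite mulrA -exprD; congr (_ * _).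
  rewrite big_ord_recl /=.
  have -> : (\sum_(i < m) (bump 0 i + C (bump 0 i)) =
     \sum_(i < m) (i + C' i) + \sum_(i < m) 2)%N.
    rewrite -big_split /=; apply: eq_bigr => i _; rewrite /C' /bump /=.
    rewrite add1n; have := hlt _ (ltn_ord i); lia.
  by rewrite sum_nat_const card_ord /= add0n addnA [RHS]exprD exprM sqrr_sign mulr1 exprD.
congr (\det _); apply/matrixP => j j'; rewrite !mxE /f'.
have -> // : bump (C 0%N) (D' j') = D j'.
rewrite /D' /bump; have := hCD 0%N j' (ltn0Sn _) (ltn_ord j').
case: ifPn => h; case: leqP => h2 /= H; lia.
Qed.

Lemma block_key (K : fieldType) m n (X : 'M[K]_(n, m + n)) (W : 'M[K]_(m + n, m))
  (Y : 'M[K]_(m, m + n)) :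
  X *m W = 0 -> \det (usubmx W) = 1 ->
  \det (col_mx Y X) = \det (Y *m W) * \det (rsubmx X).
Proof.
move=> hXW hW1.
pose G := block_mx (usubmx W) 0 (dsubmx W) (1%:M : 'M[K]_n).
have dG : \det G = 1 by rewrite det_lblock det1 mulr1.
have hG : forall p (Z : 'M[K]_(p, m + n)), Z *m G = row_mx (Z *m W) (rsubmx Z).
  move=> p Z; rewrite -{1}(hsubmxK Z) mul_row_block mulmx0 add0r mulmx1.
  by rewrite -mul_row_col hsubmxK vsubmxK.
have : col_mx Y X *m G = block_mx (Y *m W) (rsubmx Y) 0 (rsubmx X).
  by rewrite mul_col_mx !hG hXW block_mxEv.
by move=> e; rewrite -[LHS]mulr1 -dG -det_mulmx e det_ublock.
Qed.

Lemma sum_window (R : zmodType) N i n (G : nat -> R) :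
  (i + n < N)%N -> (forall c, (c < i)%N -> G c = 0) ->
  (forall c, (i + n < c)%N -> G c = 0) ->
  \sum_(c < N) G c = \sum_(r < n.+1) G (i + r)%N.
Proof.
move=> hN h1 h2.
rewrite -(big_mkord xpredT G) -(big_mkord xpredT (fun r => G (i + r)%N)).
rewrite (@big_cat_nat _ _ _ i 0 N) /=; [|lia|lia].
rewrite big1_seq ?add0r; last first.
  by move=> c /andP[_]; rewrite mem_index_iota => /andP[_ ?]; apply: h1.
rewrite (@big_cat_nat _ _ _ (i + n.+1) i N) /=; [|lia|lia].
rewrite [X in _ + X]big1_seq ?addr0; last first.
  by move=> c /andP[_]; rewrite mem_index_iota => /andP[? _]; apply: h2; lia.
rewrite -{1}[i]add0n big_addn addKn; apply: eq_bigr => c _; by rewrite addnC.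
Qed.

Import Order.TTheory Num.Theory.

Lemma det_zero_mx (K : fieldType) N (A : 'M[K]_N) : (0 < N)%N ->
  (forall i j, A i j = 0) -> \det A = 0.
Proof.
case: N A => // N A _ hE; rewrite (_ : A = 0) ?det0 //.
by apply/matrixP => i j; rewrite !mxE hE.
Qed.

Lemma det_rev (K : fieldType) n (A : 'M[K]_n) :
  \det (\matrix_(i, j) A i (rev_ord j)) = \det A * \det (perm_mx (perm (@rev_ord_inj n))^-1%g).
Proof.
rewrite -det_mulmx -col_permE; congr (\det _); apply/matrixP => i j.
by rewrite !mxE permE.
Qed.

Lemma det_rev_nz (K : fieldType) n : \det (perm_mx (perm (@rev_ord_inj n))^-1%g) != 0 :> K.
Proof. by rewrite det_perm signr_eq0. Qed.

Lemma Eel_neg (K : fieldType) q n (x : 'I_n -> K) (e : int) : e < 0 -> Eel q x e = 0.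
Proof. by rewrite /Eel ltNge => /negbTE ->. Qed.

Lemma Eel_big (K : fieldType) q n (x : 'I_n -> K) (e : int) : n%:Z < e -> Eel q x e = 0.
Proof. by rewrite /Eel ltNge => /negbTE ->; rewrite andbF. Qed.

Lemma main_gen (K : fieldType) (q : nat) (finv : K -> K) (h : FH q finv)
  (n m : nat) (x : 'I_n -> K) (mu : seq nat) :
  (0 < n)%N -> (0 < m)%N -> is_partition mu -> subpart mu (nseq m n) ->
  Tskew q finv x (nseq m n) mu =
  (-1) ^+ (n * m + sumn mu)
  * \det (\matrix_(i < n, j < n)
            frob q finv ((n + j)%:Z - (conjp mu j.+1)%:Z) (x i))
  / \det (\matrix_(i < n, j < n)
            frob q finv ((n + j)%:Z - m%:Z) (x i)).
Proof.
move=> hn hm hp hs.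
have [hf1 hf2 hf3 hf4 hf5] := part_facts hp hs.
set fr := frob q finv.
set Dm := \det (\matrix_(a < n, j < n) x a ^+ (q ^ j)).
set eps := \det (perm_mx (perm (@rev_ord_inj n))^-1%g) : K.
have heps := det_rev_nz K n.
have hAd : Adet q x (@delta_exp n) = Dm * eps.
  rewrite /Adet -det_rev; congr (\det _); apply/matrixP => i j.
  by rewrite !mxE /delta_exp /=; congr (_ ^+ (q ^ _)); lia.
set den := \det (\matrix_(i < n, j < n) fr ((n + j)%:Z - m%:Z) (x i)).
have hden : den = fr (n%:Z - m%:Z) Dm.
  rewrite /fr frob_det //; congr (\det _); apply/matrixP => i j.
  rewrite !mxE -[x i ^+ _]/(frob q finv (Posz j) (x i)) frob_comp //; congr frob; lia.
have hN : maxn (ellp (nseq m n)) (ellp mu) = m.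
  rewrite /ellp count_nseq hn mul1n; apply/maxn_idPl.
  by have := hf4 1%N (ltn0Sn _).
have hT : Tskew q finv x (nseq m n) mu =
   \det (\matrix_(i < m, j < m)
     let e : int := (nth 0%N (nseq m n) i)%:Z - (nth 0%N mu j)%:Z - i%:Z + j%:Z in
     (-1) ^+ (absz e) * frob q finv ((nth 0%N (nseq m n) i)%:Z - (i.+1)%:Z) (Eel q x e)).
  by rewrite /Tskew hN.
rewrite hT; clear hT.
have [Dm0|DmN0] := eqVneq Dm 0.
  rewrite hden Dm0 /fr frob0 // invr0 mulr0; apply: det_zero_mx => // i j.
  by rewrite mxE /Eel hAd Dm0 mul0r invr0 mulr0 if_same frob0 // mulr0.
have hAd0 : Adet q x (@delta_exp n) != 0 by rewrite hAd mulf_neq0.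
have hE0 : Eel q x 0 = 1.
  rewrite /Eel /= (_ : Adet q x (@alpha_E n 0) = Adet q x (@delta_exp n)) ?divff //.
  rewrite /Adet; congr (\det _); apply/matrixP => i j.
  by rewrite !mxE /alpha_E /delta_exp ltn0 addn0.
have hEr : forall r : nat, (r <= n)%N -> Eel q x r = Adet q x (@alpha_E n r) / Adet q x (@delta_exp n).
  by move=> r hr; rewrite /Eel /= lez_nat hr.
have hrel : forall (a : 'I_n) (s : int),
    \sum_(r < n.+1) (-1) ^+ r * fr s (Eel q x r) * fr (s + (n - r)%N%:Z) (x a) = 0.
  move=> a s; have := rel0 q x a.
  move/(congr1 (fun z => fr s (z / Adet q x (@delta_exp n)))).
  rewrite mul0r /fr frob0 // mulr_suml (big_morph _ (frobD h s) (frob0 h s)) => H; rewrite -[RHS]H.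
  apply: eq_bigr => r _.
  rewrite hEr -1?ltnS // -[x a ^+ _]/(frob q finv (Posz (n - r)) (x a)).
  rewrite mulrAC -mulrA !frobM // frobX // frobN // frob1 // frob_comp //.
  ring.
pose C k := (n + k - nth 0 mu k)%N.
pose D j := (j + conjp mu (n - j))%N.
pose Xm : 'M[K]_(n, m + n) := \matrix_(a, c) fr (n%:Z + n%:Z - 1 - (c : nat)%:Z) (x a).
pose Wm : 'M[K]_(m + n, m) := \matrix_(c, i)
   ((-1) ^+ absz ((c : nat)%:Z - (i : nat)%:Z) * fr (n%:Z - 1 - (i : nat)%:Z) (Eel q x ((c : nat)%:Z - (i : nat)%:Z))).
have hXW : Xm *m Wm = 0.
  apply/matrixP => a i; rewrite !mxE.
  pose G c := fr (n%:Z + n%:Z - 1 - c%:Z) (x a) *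
     ((-1) ^+ absz (c%:Z - (i : nat)%:Z) * fr (n%:Z - 1 - (i : nat)%:Z) (Eel q x (c%:Z - (i : nat)%:Z))).
  rewrite (eq_bigr (fun c : 'I_(m + n) => G c)); last by move=> c _; rewrite !mxE.
  rewrite (@sum_window _ _ i n G).
  - rewrite -[RHS](hrel a (n%:Z - 1 - (i : nat)%:Z)); apply: eq_bigr => r _.
    rewrite /G (_ : ((i + r)%N%:Z - (i : nat)%:Z) = (r : nat)%:Z); last lia.
    rewrite /= mulrC -mulrA -mulrA; congr (_ * (_ * fr _ _)); have := ltn_ord r; lia.
  - have := ltn_ord i; lia.
  - by move=> c hc; rewrite /G /fr Eel_neg ?frob0 ?mulr0 //; lia.
  - by move=> c hc; rewrite /G /fr Eel_big ?frob0 ?mulr0 //; lia.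
have hW1 : \det (usubmx Wm) = 1.
  rewrite det_trig; last first.
    apply/is_trig_mxP => c i hci; rewrite !mxE /= Eel_neg; last lia.
    by rewrite /fr frob0 // mulr0.
  rewrite big1 // => i _; rewrite !mxE /= subrr /= hE0 /fr frob1 //.
  by rewrite expr0 mulr1.
pose Y : 'M[K]_(m, m + n) := \matrix_(k, c) ((c : nat) == C k)%:R.
pose xf (a : nat) := if insub a is Some i then x i else 0.
pose f (a c : nat) := fr (n%:Z + n%:Z - 1 - c%:Z) (xf a).
have [hC1 hD1 hC2 hD2 hCD] := CD_facts hp hs.
have hM : col_mx Y Xm = selmx m n f C.
  apply/matrixP => r c; rewrite !mxE; case: splitP => r' hr; rewrite hr.
    by rewrite mxE.
  by rewrite mxE /f /xf addKn valK.
have hL := laplace_sel f hC1 hD1 hC2 hD2 hCD.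
have hB := block_key Y hXW hW1.
have hYW : forall (k i : 'I_m), (Y *m Wm) k i = Wm (Ordinal (hC2 k (ltn_ord k))) i.
  move=> k i; rewrite !mxE (bigD1 (Ordinal (hC2 k (ltn_ord k)))) //= big1.
    by rewrite !mxE eqxx mul1r addr0.
  move=> c hc; rewrite mxE (_ : (c == C k :> nat) = false) ?mul0r //.
  by apply/negbTE; apply: contra hc => /eqP e; apply/eqP/val_inj.
have -> : \matrix_(i < m, j < m)
     (let e : int := (nth 0%N (nseq m n) i)%:Z - (nth 0%N mu j)%:Z - i%:Z + j%:Z in
     (-1) ^+ (absz e) * frob q finv ((nth 0%N (nseq m n) i)%:Z - (i.+1)%:Z) (Eel q x e))
   = (Y *m Wm)^T.
  apply/matrixP => i j; rewrite mxE [RHS]mxE hYW !mxE /= nth_nseq ltn_ord.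
  have hj := hf1 j.
  have -> : ((n + j - nth 0 mu j)%N%:Z - i%:Z) = n%:Z - (nth 0%N mu j)%:Z - i%:Z + j%:Z by lia.
  congr (_ * fr _ _); lia.
rewrite det_tr.
have hden2 : den = \det (rsubmx Xm) * eps.
  rewrite -det_rev /den; congr (\det _); apply/matrixP => i j; rewrite !mxE /=.
  congr (fr _ _); have := ltn_ord j; lia.
have hnum : \det (\matrix_(i < n, j < n) frob q finv ((n + j)%:Z - (conjp mu j.+1)%:Z) (x i))
    = \det (\matrix_(j < n, j' < n) f j (D j')) * eps.
  rewrite -det_rev; congr (\det _); apply/matrixP => i j; rewrite !mxE /f /xf valK /D /=.
  have hj := ltn_ord j.
  have -> : (n - (n - j.+1))%N = j.+1 by lia.
  congr (frob _ _ _ _); lia.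
have hdenN : den != 0.
  rewrite hden; apply: contra DmN0 => /eqP e; apply/eqP.
  by apply: (frob_inj h (e := n%:Z - m%:Z)); rewrite -/fr e /fr frob0.
have hR : \det (rsubmx Xm) != 0.
  by apply: contra hdenN => /eqP e; rewrite hden2 e mul0r.
have [T hTT] := sign_parity hp hs.
have hsgn : (-1) ^+ (\sum_(k < m) (k + C k))%N = (-1) ^+ (n * m + sumn mu) :> K.
  apply: (mulIf (_ : (-1) ^+ sumn mu != 0 :> K)); first by rewrite signr_eq0.
  by rewrite -!exprD -addnA addnn hTT addnC !exprD -!muln2 !exprM !sqrr_sign.
have key := hB; rewrite hM hL hsgn in key.
rewrite hnum hden2 mulrA key.
field.
by rewrite hR heps.
Qed.


Lemma FH_of (F : finFieldType) (n : nat) (K : fieldType)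
  (iota : {rmorphism {mpoly F[n]} -> K}) (finv : K -> K) :
  (forall y : K, finv y ^+ #|F| = y) -> FH #|F| finv.
Proof.
move=> hi; have [p pp pF] := finPcharP F.
have pK : p \in [pchar K].
  rewrite inE pp /=; move: pF; rewrite inE pp /= => /eqP hF.
  by rewrite -(rmorph_nat iota) -mpolyC_nat hF mpolyC0 rmorph0.
have pnF : p.-nat #|F|.
  have := fin_ring_pchar_abelem pF; case/and3P; rewrite pgroupE cardsT.
  by [].
split => //.
  by apply: (leq_trans _ (finNzRing_gt1 F)).
move=> a b; apply: exprDn_pchar.
by rewrite (eq_pnat _ (pcharf_eq pK)).
Qed.


Theorem mainTheorem3 (F : finFieldType) (n m : nat) (K : fieldType)
  (iota : {rmorphism {mpoly F[n]} -> K}) (finv : K -> K) (mu : seq nat) :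
  injective iota ->
  (forall y : K, finv y ^+ #|F| = y) ->
  (1 <= m)%N ->
  is_partition mu ->
  subpart mu (nseq m n) ->
  let x := fun i : 'I_n => iota 'X_i in
  Tskew #|F| finv x (nseq m n) mu =
  (-1) ^+ (n * m + sumn mu)
  * \det (\matrix_(i < n, j < n)
            frob #|F| finv ((n + j)%:Z - (conjp mu j.+1)%:Z) (x i))
  / \det (\matrix_(i < n, j < n)
            frob #|F| finv ((n + j)%:Z - m%:Z) (x i)).
Proof.
move=> _ hi hm hp hs x.
have h := FH_of iota hi.
case: (posnP n) => hn; last exact: main_gen.
subst n.
have hz : forall k, nth 0%N mu k = 0%N.
  by move=> k; have := hs k; rewrite nth_nseq if_same; lia.
have hS : sumn mu = 0%N by rewrite (@sumn_window mu 0) ?big_ord0.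
have hE : ellp mu = 0%N.
  apply/eqP; rewrite -leqn0 leqNgt -has_count; apply/hasPn => a /(nthP 0%N) [k _ <-].
  by rewrite hz.
have hN : maxn (ellp (nseq m 0)) (ellp mu) = 0%N.
  by rewrite hE /ellp count_nseq /= mul0n.
rewrite /Tskew hN hS !det_mx00 mul0n expr0 mul1r divr1 //.
Qed.
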